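(* Let $N\ge 2$ and $1\le\tilde N\le N-1$ be integers. Let $\beta>0$ satisfy $(\beta+1)^{N-\tilde N-1}>\beta^{N-\tilde N+1}$, and suppose that, for all $x\in\mathcal{X}$, $$V_{\tilde N+1}^{\tilde N}(x)\le (\beta+1)\,V_{\tilde N}^{\tilde N}(x)\qquad\text{and}\qquad V_n^{\tilde N}(x)\le (\beta+1)\,l(x,\mu_n(x))\ \text{ for all } n\in\{\tilde N+1,\dots,N\}.$$ Set $$\alpha=1-\frac{\beta^{N-\tilde N+1}}{(\beta+1)^{N-\tilde N-1}}\in(0,1].$$ Then for every $x\in\mathcal{X}$, $$\alpha\, J_\infty^{N,\tilde N}(x)\le V_N^{\tilde N}(x).$$
   Context: Let $\mathcal{D}\subset\mathbb{R}^n$ and $\mathcal{U}\subset\mathbb{R}^m$ be compact, and let $f:\mathcal{D}\times\mathcal{U}\to\mathcal{D}$ define the discrete-time system $x(k+1)=f(x(k),u(k))$, with $f(0,0)=0$. The stage cost $l:\mathcal{D}\times\mathcal{U}\to[0,\infty)$ is positive definite with $l(0,0)=0$. The set $\mathcal{X}\subseteq\mathcal{D}$ is control invariant: for every $x\in\mathcal{X}$ there is $u\in\mathcal{U}$ with $f(x,u)\in\mathcal{X}$. For $x\in\mathcal{X}$ write $\mathcal{U}(x)=\{u\in\mathcal{U}: f(x,u)\in\mathcal{X}\}$. Fix integers $N$ and $\tilde N$ with $0\le\tilde N\le N-1$. Define value functions on $\mathcal{X}$ recursively (dynamic programming form of the MPC problem with prediction horizon $N$ in which the state constraint $x\in\mathcal{X}$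 is imposed only during the first $N-\tilde N$ steps, the last $\tilde N$ steps being unconstrained): - $V_0^{\tilde N}\equiv 0$. - For $n\in\{1,\dots,\tilde N\}$: $V_n^{\tilde N}(x)=\min_{u\in\mathcal{U}}\big[V_{n-1}^{\tilde N}(f(x,u))+l(x,u)\big]$, with $\mu_n(x)$ a minimizer. - For $n\in\{\tilde N+1,\dots,N\}$: $V_n^{\tilde N}(x)=\min_{u\in\mathcal{U}(x)}\big[V_{n-1}^{\tilde N}(f(x,u))+l(x,u)\big]$, with $\mu_n(x)$ a minimizer; in particular $f(x,\mu_n(x))\in\mathcal{X}$. All minima are assumed to be attained. The MPC closed loop applies the feedback $\mu_N$: given $x\in\mathcal{X}$, set $x(0)=x$ and $x(k+1)=f(x(k),\mu_N(x(k)))$. This trajectory remains in $\mathcal{X}$. The closed-loop infinite-horizon cost is $$J_\infty^{N,\tilde N}(x)=\sum_{k=0}^{\infty} l\big(x(k),\mu_N(x(k))\big).$$ *)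

(* Defs.v *)
From HB Require Import structures.
From mathcomp Require Import all_boot all_order all_algebra.
From mathcomp Require Import all_classical all_reals all_analysis.
Set Implicit Arguments. Unset Strict Implicit. Unset Printing Implicit Defensive.
Import Order.TTheory GRing.Theory Num.Theory.
Import numFieldNormedType.Exports.
Local Open Scope classical_set_scope.
Local Open Scope ring_scope.

Definition cl_traj (R : realType) (p q : nat)
  (f : 'rV[R]_p -> 'rV[R]_q -> 'rV[R]_p) (muN : 'rV[R]_p -> 'rV[R]_q)
  (x : 'rV[R]_p) (k : nat) : 'rV[R]_p :=
  iter k (fun y => f y (muN y)) x.

Definition J_inf (R : realType) (p q : nat)
  (f : 'rV[R]_p -> 'rV[R]_q -> 'rV[R]_p) (l : 'rV[R]_p -> 'rV[R]_q -> R)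
  (muN : 'rV[R]_p -> 'rV[R]_q) (x : 'rV[R]_p) : \bar R :=
  (\sum_(0 <= k <oo) (l (cl_traj f muN x k) (muN (cl_traj f muN x k)))%:E)%E.

(* Main.v *)
Require Import Defs.
From HB Require Import structures.
From mathcomp Require Import all_boot all_order all_algebra.
From mathcomp Require Import all_classical all_reals all_analysis.
From mathcomp Require Import zify ring lra.
Import Order.TTheory GRing.Theory Num.Theory.
Import numFieldNormedType.Exports.
Local Open Scope classical_set_scope.
Local Open Scope ring_scope.

Fixpoint olt (R : realType) (p q : nat)
  (f : 'rV[R]_p -> 'rV[R]_q -> 'rV[R]_p) (mu : nat -> 'rV[R]_p -> 'rV[R]_q)
  (N : nat) (y : 'rV[R]_p) (k : nat) : 'rV[R]_p :=
  match k with
  | 0 => y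
  | k.+1 => let z := @olt R p q f mu N y k in f z (mu (N - k)%N z)
  end.

Theorem theorem1 (R : realType) (p q : nat)
  (D : set 'rV[R]_p) (U : set 'rV[R]_q)
  (f : 'rV[R]_p -> 'rV[R]_q -> 'rV[R]_p) (l : 'rV[R]_p -> 'rV[R]_q -> R)
  (X : set 'rV[R]_p)
  (N Nt : nat) (V : nat -> 'rV[R]_p -> R) (mu : nat -> 'rV[R]_p -> 'rV[R]_q)
  (beta : R) :
  compact D -> compact U ->
  D 0 -> U 0 ->
  (forall x u, D x -> U u -> D (f x u)) ->
  f 0 0 = 0 ->
  l 0 0 = 0 ->
  (forall x u, D x -> U u -> 0 <= l x u) ->
  (forall x u, D x -> U u -> (x, u) != (0, 0) -> 0 < l x u) ->
  X `<=` D ->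
  (forall x, X x -> exists2 u, U u & X (f x u)) ->
  (* V_0 = 0 *)
  (forall x, D x -> V 0%N x = 0) ->
  (* unconstrained steps n = 1..Nt (defined on D) *)
  (forall n x, (1 <= n <= Nt)%N -> D x ->
     [/\ U (mu n x),
         V n x = V n.-1 (f x (mu n x)) + l x (mu n x)
       & forall u, U u -> V n x <= V n.-1 (f x u) + l x u]) ->
  (* constrained steps n = Nt+1..N (defined on X) *)
  (forall n x, (Nt < n <= N)%N -> X x ->
     [/\ U (mu n x), X (f x (mu n x)),
         V n x = V n.-1 (f x (mu n x)) + l x (mu n x)
       & forall u, U u -> X (f x u) -> V n x <= V n.-1 (f x u) + l x u]) ->
  (2 <= N)%N -> (1 <= Nt <= N.-1)%N ->
  0 < beta ->
  beta ^+ (N - Nt + 1) < (beta + 1) ^+ (N - Nt - 1) ->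
  (forall x, X x -> V Nt.+1 x <= (beta + 1) * V Nt x) ->
  (forall x n, X x -> (Nt < n <= N)%N -> V n x <= (beta + 1) * l x (mu n x)) ->
  forall x, X x ->
    ((1 - beta ^+ (N - Nt + 1) / (beta + 1) ^+ (N - Nt - 1))%:E
       * J_inf f l (mu N) x <= (V N x)%:E)%E.
Proof.
move=> cD cU D0 U0 fD f00 l00 l0 lpos XD Xinv V0 Hunc Hcon N2 /andP[Nt1 NtN]
  bpos bineq HVNt HVl.
have NtN' : (Nt < N)%N by lia.
have Vge0 : forall n, (n <= N)%N -> forall x, (D x /\ (n <= Nt)%N) \/ X x ->
    0 <= V n x.
  elim=> [|n IH] HnN x Hx.
    by rewrite V0 //; case: Hx => [[]//|/XD].
  case: (leqP n.+1 Nt) => Hn.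
    have Dx : D x by case: Hx => [[]|/XD].
    have [Umu -> _] := Hunc n.+1 x (ltac:(apply/andP; split; lia)) Dx.
    rewrite /= addr_ge0 //; last exact: l0.
    apply: IH; first lia.
    by left; split; [exact: fD|lia].
  have Xx : X x by case: Hx => [[_ ?]|//]; lia.
  have [Umu Xf -> _] := Hcon n.+1 x (ltac:(apply/andP; split; lia)) Xx.
  rewrite /= addr_ge0 //; last exact: l0 (XD _ Xx) Umu.
  by apply: IH; [lia|right].
set M := (N - Nt)%N.
have M1 : (1 <= M)%N by rewrite /M; lia.
have NM : (N - M = Nt)%N by rewrite /M; lia.
set alpha := 1 - beta ^+ (M + 1) / (beta + 1) ^+ (M - 1).
have step : forall y, X y ->
    V N (f y (mu N y)) <= V N y - alpha * l y (mu N y).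
  move=> y Xy.
  pose ol := @olt R p q f mu N y.
  have ol0 : ol 0%N = y by [].
  have olS : forall k, ol k.+1 = f (ol k) (mu (N - k)%N (ol k)) by [].
  have Xol : forall k, (k <= M)%N -> X (ol k).
    elim=> [|k IH] Hk //.
    rewrite olS.
    have [] := Hcon (N - k)%N (ol k) (ltac:(apply/andP; split; rewrite /M in Hk; lia))
      (IH (ltac:(lia))).
    by [].
  have rec : forall k, (k < M)%N -> V (N - k)%N (ol k) =
      V (N - k.+1)%N (ol k.+1) + l (ol k) (mu (N - k)%N (ol k)).
    move=> k Hk.
    have [_ _ -> _] := Hcon (N - k)%N (ol k)
      (ltac:(apply/andP; split; rewrite /M in Hk; lia)) (Xol k (ltac:(lia))).
    by rewrite olS; congr (V _ _ + _); lia.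
  have bnd : forall k, (k < M)%N ->
      V (N - k)%N (ol k) <= (beta + 1) * l (ol k) (mu (N - k)%N (ol k)).
    move=> k Hk; apply: HVl; [apply: Xol; lia | rewrite /M in Hk; lia].
  have delta : forall j k, j = (M - k)%N -> (1 <= k <= M)%N ->
      V (N - k)%N.+1 (ol k) - V (N - k)%N (ol k) <= beta * V Nt (ol M).
    elim=> [|j IH] k Hj /andP[k1 kM].
      have -> : k = M by lia.
      rewrite NM.
      have := HVNt _ (Xol M (leqnn _)); lra.
    have Hk : (k < M)%N by lia.
    have := IH k.+1 (ltac:(lia)) (ltac:(apply/andP; split; lia)).
    have -> : ((N - k.+1).+1 = (N - k))%N by rewrite /M in Hk; lia.
    have := rec k Hk.
    have [Umu Xf _ _] := Hcon (N - k)%N (ol k)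
      (ltac:(apply/andP; split; rewrite /M in Hk; lia)) (Xol k (ltac:(lia))).
    have [_ _ _ Hle] := Hcon (N - k).+1 (ol k)
      (ltac:(apply/andP; split; rewrite /M in Hk; lia)) (Xol k (ltac:(lia))).
    have := Hle _ Umu Xf.
    rewrite /= -olS.
    lra.
  have decay : forall k, (k < M)%N ->
      (beta + 1) ^+ k * V (N - k.+1)%N (ol k.+1) <= beta ^+ k.+1 * l y (mu N y).
    elim=> [|k IH] Hk.
      have := rec 0%N Hk; have := bnd 0%N Hk.
      rewrite !subn0 ol0 expr0 mul1r expr1; lra.
    have := rec k.+1 Hk; have := bnd k.+1 Hk.
    move=> h1 h2.
    have h3 : (beta + 1) * V (N - k.+2)%N (ol k.+2) <= beta * V (N - k.+1)%N (ol k.+1).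
      rewrite h2 in h1 *; lra.
    have Pge0 : 0 <= (beta + 1) ^+ k by apply: exprn_ge0; lra.
    have h4 := ler_wpM2l Pge0 h3.
    have h5 := ler_wpM2l (ltW bpos) (IH (ltac:(lia))).
    rewrite exprS [beta ^+ k.+2]exprS.
    lra.
  have d1 := delta (M - 1)%N 1%N erefl (ltac:(apply/andP; split; lia)).
  have e := decay (M - 1)%N (ltac:(lia)).
  have r0 := rec 0%N M1.
  move: d1 e r0.
  have -> : ((M - 1).+1 = M)%N by lia.
  have -> : ((N - 1).+1 = N)%N by lia.
  rewrite NM olS !subn0 ol0.
  set W := V Nt (ol M).
  set P := (beta + 1) ^+ (M - 1).
  set lz := l y (mu N y).
  move=> d1 e r0.
  have Pgt0 : 0 < P by apply: exprn_gt0; lra.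
  have hW : W <= beta ^+ M * lz / P by rewrite ler_pdivlMr // mulrC.
  have key : beta * W <= beta ^+ (M + 1) / P * lz.
    have -> : beta ^+ (M + 1) / P * lz = beta * (beta ^+ M * lz / P).
      by rewrite addn1 exprS; ring.
    by apply: ler_wpM2l => //; lra.
  rewrite /alpha.
  lra.
move=> x Xx.
pose cl k := cl_traj f (mu N) x k.
have clS : forall k, cl k.+1 = f (cl k) (mu N (cl k)) by [].
have Xcl : forall k, X (cl k).
  elim=> [|k IH] //; rewrite clS.
  by have [] := Hcon N (cl k) (ltac:(apply/andP; split; lia)) IH.
have lge0 : forall k, 0 <= l (cl k) (mu N (cl k)).
  move=> k; have [Umu _ _ _] := Hcon N (cl k) (ltac:(apply/andP; split; lia)) (Xcl k).
  exact: l0 (XD _ (Xcl k)) Umu.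
have alpha_ge0 : 0 <= alpha.
  rewrite /alpha subr_ge0 ler_pdivrMr ?mul1r; last by apply: exprn_gt0; lra.
  by apply: ltW; move: bineq; rewrite /M.
have part : forall K, alpha * (\sum_(0 <= k < K) l (cl k) (mu N (cl k)))
    + V N (cl K) <= V N x.
  elim=> [|K IH]; first by rewrite big_geq // mulr0 add0r.
  rewrite big_nat_recr //= mulrDr.
  have := step (cl K) (Xcl K); rewrite -clS; lra.
rewrite /J_inf -nneseriesZl; last by move=> i _; rewrite lee_fin.
apply: lime_le.
  by apply: is_cvg_nneseries => n _ _; rewrite -EFinM lee_fin mulr_ge0.
apply: nearW => n.
under eq_bigr do rewrite -EFinM.
rewrite sumEFin lee_fin -mulr_sumr.
have := part n; have := Vge0 N (leqnn _) (cl n) (or_intror (Xcl n)).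
rewrite /cl => h1 h2; apply: le_trans h2; rewrite lerDl.
exact: h1.
Qed.
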